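(* Let $A$ be a noetherian adic ring with ideal of definition $I$, let $S$ be a profinite set, let $C(S,A)$ denote the ring of continuous maps $S\to A$, and let $f\in A$. Let $\widehat{(\cdot)}$ denote $I$-adic completion. Then the natural map $$\widehat{C(S,A)[f^{-1}]}\longrightarrow C\big(S,\widehat{A[f^{-1}]}\big)$$ is an isomorphism. *)

(* Defs.v *)
From HB Require Import structures.
From mathcomp Require Import all_boot all_order all_algebra.
From mathcomp Require Import all_classical all_reals all_analysis.
Set Implicit Arguments. Unset Strict Implicit. Unset Printing Implicit Defensive.
Import Order.TTheory GRing.Theory Num.Theory.
Local Open Scope classical_set_scope.
Local Open Scope ring_scope.

Definition list_all {T : Type} (P : T -> Prop) (s : seq T) : Prop :=
  foldr (fun x acc => P x /\ acc) True s.

Section Ideals.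
Variable A : comPzRingType.

Definition is_ideal (J : A -> Prop) : Prop :=
  [/\ J 0, (forall x y, J x -> J y -> J (x + y)) &
      (forall a x, J x -> J (a * x))].

Definition noetherian_ring : Prop :=
  forall J : nat -> (A -> Prop),
    (forall n, is_ideal (J n)) ->
    (forall n x, J n x -> J n.+1 x) ->
    exists N, forall m x, (N <= m)%N -> J m x -> J N x.

Fixpoint Ipow (I : A -> Prop) (n : nat) : A -> Prop :=
  match n with
  | 0%N => fun _ => True
  | n'.+1 => fun x => exists s : seq (A * A),
       list_all (fun p => I p.1 /\ Ipow I n' p.2) s /\
       x = \sum_(p <- s) p.1 * p.2
  end.

Definition adic_ring (I : A -> Prop) : Prop :=
  is_ideal I /\
  (forall x, (forall n, Ipow I n x) -> x = 0) /\
  (forall a : nat -> A, (forall n, Ipow I n (a n.+1 - a n)) ->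
     exists l, forall n, Ipow I n (l - a n)).

End Ideals.

(* The localization B = A[f^-1], as representatives a/f^k = (a,k).     *)
Section Loc.
Variables (A : comPzRingType) (I : A -> Prop) (f : A).

Definition Brep := (A * nat)%type.
Definition eqB (x y : Brep) : Prop :=
  exists m, f ^+ m * (x.1 * f ^+ y.2 - y.1 * f ^+ x.2) = 0.
Definition addB (x y : Brep) : Brep := (x.1 * f ^+ y.2 + y.1 * f ^+ x.2, (x.2 + y.2)%N).
Definition mulB (x y : Brep) : Brep := (x.1 * y.1, (x.2 + y.2)%N).
Definition oppB (x : Brep) : Brep := (- x.1, x.2).
Definition subB x y := addB x (oppB y).
Definition zeroB : Brep := (0, 0%N).
Definition oneB : Brep := (1, 0%N).
Definition iotaB (a : A) : Brep := (a, 0%N).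

Definition IpowB (n : nat) (x : Brep) : Prop :=
  exists s : seq (Brep * A),
    list_all (fun p => Ipow I n p.2) s /\
    eqB x (foldr addB zeroB (map (fun p => mulB p.1 (iotaB p.2)) s)).

(* The I-adic completion of B: compatible systems in lim B/I^nB, represented by
   sequences (b_n) with b_(n+1) = b_n mod I^n B; two are equal iff
   b_n = b'_n mod I^n B for all n. *)
Definition hatB_elem (b : nat -> Brep) : Prop :=
  forall n, IpowB n (subB (b n.+1) (b n)).
Definition eqHatB (b b' : nat -> Brep) : Prop :=
  forall n, IpowB n (subB (b n) (b' n)).
Definition addHatB (b b' : nat -> Brep) := fun n => addB (b n) (b' n).
Definition mulHatB (b b' : nat -> Brep) := fun n => mulB (b n) (b' n).
Definition oneHatB : nat -> Brep := fun _ => oneB.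

Variable S : topologicalType.

Definition cont_adic (g : S -> A) : Prop :=
  forall n (s : S), nbhs s [set t | Ipow I n (g t - g s)].

(* continuity of h : S -> hat(B) for the completion (inverse limit) topology,
   whose basic neighbourhoods of 0 are the kernels of hat(B) -> B/I^n B *)
Definition cont_hatB (h : S -> nat -> Brep) : Prop :=
  forall n (s : S), nbhs s [set t | IpowB n (subB (h t n) (h s n))].

(* R = C(S,A)[f^-1] : representatives g/f^k = (g,k), g continuous. *)
Definition Rrep := ((S -> A) * nat)%type.
Definition Rvalid (x : Rrep) : Prop := cont_adic x.1.
Definition eqR (x y : Rrep) : Prop :=
  exists m, forall s, f ^+ m * (x.1 s * f ^+ y.2 - y.1 s * f ^+ x.2) = 0.
Definition addR (x y : Rrep) : Rrep :=
  (fun s => x.1 s * f ^+ y.2 + y.1 s * f ^+ x.2, (x.2 + y.2)%N).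
Definition mulR (x y : Rrep) : Rrep := (fun s => x.1 s * y.1 s, (x.2 + y.2)%N).
Definition oppR (x : Rrep) : Rrep := (fun s => - x.1 s, x.2).
Definition subR x y := addR x (oppR y).
Definition zeroR : Rrep := (fun _ => 0, 0%N).
Definition oneR : Rrep := (fun _ => 1, 0%N).
Definition iotaR (a : A) : Rrep := (fun _ => a, 0%N).

Definition IpowR (n : nat) (x : Rrep) : Prop :=
  exists s : seq (Rrep * A),
    list_all (fun p => Rvalid p.1 /\ Ipow I n p.2) s /\
    eqR x (foldr addR zeroR (map (fun p => mulR p.1 (iotaR p.2)) s)).

Definition hatR_elem (x : nat -> Rrep) : Prop :=
  (forall n, Rvalid (x n)) /\ (forall n, IpowR n (subR (x n.+1) (x n))).
Definition eqHatR (x y : nat -> Rrep) : Prop :=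
  forall n, IpowR n (subR (x n) (y n)).
Definition addHatR (x y : nat -> Rrep) := fun n => addR (x n) (y n).
Definition mulHatR (x y : nat -> Rrep) := fun n => mulR (x n) (y n).
Definition oneHatR : nat -> Rrep := fun _ => oneR.

(* The natural map hat(R) -> C(S, hat(B)): the completion of the map
   R -> C(S, hat B), g/f^k |-> (s |-> g(s)/f^k). *)
Definition Phi (x : nat -> Rrep) : S -> nat -> Brep :=
  fun s n => ((x n).1 s, (x n).2).

End Loc.

Definition profinite (S : topologicalType) : Prop :=
  [/\ compact [set: S], hausdorff_space S & totally_disconnected [set: S]].

(* Main.v *)
Require Import Defs.
From HB Require Import structures.
From mathcomp Require Import all_boot all_order all_algebra.
From mathcomp Require Import all_classical all_reals all_analysis.
From mathcomp Require Import ring.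
Set Implicit Arguments. Unset Strict Implicit. Unset Printing Implicit Defensive.
Import Order.TTheory GRing.Theory Num.Theory.
Local Open Scope classical_set_scope.
Local Open Scope ring_scope.
Ltac gpow := rewrite ?exprD ?expr0;
  repeat match goal with |- context [?x ^+ ?n] =>
    let y := fresh "pw" in set y := x ^+ n; clearbody y end.

Lemma list_all_cat {T} (P : T -> Prop) s1 s2 :
  list_all P (s1 ++ s2) <-> list_all P s1 /\ list_all P s2.
Proof. elim: s1 => [|a s IH] /=; first by tauto. rewrite IH; tauto. Qed.

Lemma list_allP {T : eqType} (P : T -> Prop) s :
  list_all P s <-> (forall x, x \in s -> P x).
Proof.
elim: s => [|a s IH] /=; first by split.
rewrite IH; split.
  by move=> [Pa Hs] x; rewrite inE => /orP [/eqP -> | /Hs].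
by move=> H; split; [apply: H; rewrite inE eqxx | move=> x xs; apply: H; rewrite inE xs orbT].
Qed.

Lemma list_all_map {T U} (P : U -> Prop) (g : T -> U) s :
  list_all P (map g s) <-> list_all (fun x => P (g x)) s.
Proof. by elim: s => [|a s IH] //=; rewrite IH. Qed.

Lemma list_all_impl {T} (P Q : T -> Prop) s :
  (forall x, P x -> Q x) -> list_all P s -> list_all Q s.
Proof. move=> H; elim: s => [|a s IH] //= [Pa Ps]; split; auto. Qed.

Section IdealFacts.
Variables (A : comPzRingType) (I : A -> Prop).
Hypothesis HI : is_ideal I.

Lemma Ipow_ideal n : is_ideal (Ipow I n).
Proof.
case: HI => I0 ID IM.
elim: n => [|n [J0 JD JM]]; first by split.
split.
- by exists [::]; split => //; rewrite big_nil.
- move=> x y [s [Hs ->]] [t [Ht ->]]; exists (s ++ t); split.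
    by apply/list_all_cat.
  by rewrite big_cat.
- move=> a x [s [Hs ->]]; exists (map (fun p => (p.1, a * p.2)) s); split.
    apply/list_all_map; apply: list_all_impl Hs => p [? ?]; split => //; exact: JM.
  rewrite big_map big_distrr /=; apply: eq_bigr => p _; ring.
Qed.

Lemma Ipow0 n : Ipow I n 0.
Proof. by case: (Ipow_ideal n). Qed.
Lemma IpowD n x y : Ipow I n x -> Ipow I n y -> Ipow I n (x + y).
Proof. by case: (Ipow_ideal n) => _ H _; apply: H. Qed.
Lemma IpowMl n a x : Ipow I n x -> Ipow I n (a * x).
Proof. by case: (Ipow_ideal n) => _ _ H; apply: H. Qed.
Lemma IpowMr n a x : Ipow I n x -> Ipow I n (x * a).
Proof. by rewrite mulrC; apply: IpowMl. Qed.
Lemma IpowN n x : Ipow I n x -> Ipow I n (- x).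
Proof. by move=> H; rewrite -mulN1r; apply: IpowMl. Qed.
Lemma Ipow_sub n x y : Ipow I n x -> Ipow I n y -> Ipow I n (x - y).
Proof. by move=> Hx Hy; apply: IpowD => //; apply: IpowN. Qed.
Lemma IpowNr n x y : Ipow I n (x - y) -> Ipow I n (y - x).
Proof. by move=> H; rewrite -opprB; apply: IpowN. Qed.
Lemma Ipow_sum n (T : Type) (r : seq T) (F : T -> A) :
  (forall i, Ipow I n (F i)) -> Ipow I n (\sum_(i <- r) F i).
Proof. move=> H; elim/big_ind: _ => //; [exact: Ipow0 | exact: IpowD]. Qed.
Lemma Ipow_eq n x y : Ipow I n x -> x = y -> Ipow I n y.
Proof. by move=> H <-. Qed.

Lemma IpowS1 n x y : I x -> Ipow I n y -> Ipow I n.+1 (x * y).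
Proof. by move=> Ix Hy; exists [:: (x, y)]; split => //=; rewrite big_seq1. Qed.

Lemma Ipow_mono n x : Ipow I n.+1 x -> Ipow I n x.
Proof.
elim: n x => [|n IH] x //= [s [Hs ->]].
exists s; split => //; apply: list_all_impl Hs => p [? ?]; split => //; exact: IH.
Qed.

Lemma Ipow_le m n x : (m <= n)%N -> Ipow I n x -> Ipow I m x.
Proof.
move=> /subnK <-; elim: (n - m)%N x => [|k IH] x //= H.
by apply: IH; apply: Ipow_mono.
Qed.

Lemma Ipow_trans n x y z : Ipow I n (x - y) -> Ipow I n (y - z) -> Ipow I n (x - z).
Proof. move=> H1 H2; have -> : x - z = (x - y) + (y - z) by ring. exact: IpowD. Qed.

End IdealFacts.
From Stdlib Require Import ClassicalEpsilon.

Section FG.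
Variables (A : comPzRingType).

Definition comb (gs : seq A) (r : nat -> A) := \sum_(i < size gs) gs`_i * r i.

Definition spanL (gs : seq A) (x : A) := exists r, x = comb gs r.

Lemma spanL_ideal gs : is_ideal (spanL gs).
Proof.
split.
- exists (fun _ => 0); rewrite /comb; symmetry; apply: big1 => i _; by rewrite mulr0.
- move=> x y [r1 ->] [r2 ->]; exists (fun i => r1 i + r2 i).
  by rewrite /comb -big_split /=; apply: eq_bigr => i _; rewrite mulrDr.
- move=> a x [r ->]; exists (fun i => a * r i).
  by rewrite /comb big_distrr /=; apply: eq_bigr => i _; rewrite mulrCA.
Qed.

Lemma spanL_rcons gs y x : spanL gs x -> spanL (rcons gs y) x.
Proof.
move=> [r ->]; exists (fun i => if (i < size gs)%N then r i else 0).
rewrite /comb size_rcons big_ord_recr /= ltnn mulr0 addr0.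
apply: eq_bigr => i _; rewrite nth_rcons ltn_ord; done.
Qed.

Lemma spanL_last gs y : spanL (rcons gs y) y.
Proof.
exists (fun i => if i == size gs then 1 else 0).
rewrite /comb size_rcons big_ord_recr /= eqxx mulr1 nth_rcons ltnn eqxx big1 ?add0r //.
move=> i _; rewrite (ltn_eqF (ltn_ord i)) mulr0 //.
Qed.

Lemma noeth_fg (J : A -> Prop) : noetherian_ring A -> is_ideal J ->
  exists gs, (forall i, (i < size gs)%N -> J gs`_i) /\ (forall x, J x -> spanL gs x).
Proof.
move=> HN [J0 JD JM].
apply: NNPP => Hno.
have H : forall gs, (forall i, (i < size gs)%N -> J gs`_i) ->
    exists x, J x /\ ~ spanL gs x.
  move=> gs Hgs; apply: NNPP => Hc; apply: Hno; exists gs; split => // x Jx.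
  by apply: NNPP => Hr; apply: Hc; exists x.
pose next gs := epsilon (inhabits (0 : A)) (fun x => J x /\ ~ spanL gs x).
pose L := fix L k := if k is k'.+1 then rcons (L k') (next (L k')) else [::].
have HL : forall k i, (i < size (L k))%N -> J (L k)`_i.
  elim=> [|k IH] i //=.
  rewrite size_rcons nth_rcons ltnS leq_eqVlt => /orP [/eqP ->|lt].
    rewrite ltnn eqxx; have := epsilon_spec (inhabits (0 : A)) _ (H _ IH).
    by case.
  by rewrite lt; apply: IH.
have [N HNN] := HN (fun k => spanL (L k)) (fun k => spanL_ideal (L k))
   (fun k x => @spanL_rcons (L k) (next (L k)) x).
have := epsilon_spec (inhabits (0 : A)) _ (H _ (HL N)).
rewrite -/(next (L N)) => [[_]]; apply.
apply: (HNN N.+1) => //=; exact: spanL_last.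
Qed.

End FG.

Section Lift.
Variables (A : comPzRingType) (I : A -> Prop).
Hypothesis HI : is_ideal I.
Hypothesis Hsep : forall x, (forall n, Ipow I n x) -> x = 0.
Hypothesis Hcomp : forall a : nat -> A, (forall n, Ipow I n (a n.+1 - a n)) ->
     exists l, forall n, Ipow I n (l - a n).
Variable n : nat.
Variable gs : seq A.
Hypothesis gsI : forall i, (i < size gs)%N -> Ipow I n gs`_i.
Hypothesis gsSpan : forall x, Ipow I n x -> spanL gs x.
Let Ipow0 := Ipow0 HI. Let IpowD := IpowD HI. Let Ipow_sub := Ipow_sub HI.
Let IpowMl := IpowMl HI. Let Ipow_sum := Ipow_sum HI.

Lemma combD r1 r2 : comb gs (fun i => r1 i + r2 i) = comb gs r1 + comb gs r2.
Proof. by rewrite /comb -big_split /=; apply: eq_bigr => i _; rewrite mulrDr. Qed.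
Lemma combB r1 r2 : comb gs (fun i => r1 i - r2 i) = comb gs r1 - comb gs r2.
Proof. by rewrite /comb -sumrB /=; apply: eq_bigr => i _; rewrite mulrBr. Qed.
Lemma comb0 : comb gs (fun _ => 0) = 0.
Proof. by rewrite /comb; apply: big1 => i _; rewrite mulr0. Qed.
Lemma comb_Ipow m r : (forall i, Ipow I m (r i)) -> Ipow I m (comb gs r).
Proof. move=> H; apply: Ipow_sum => // i; exact: IpowMl. Qed.

Lemma decomp_list m s :
  (forall x, Ipow I (m + n) x -> exists r, (forall i, Ipow I m (r i)) /\ x = comb gs r) ->
  list_all (fun p => I p.1 /\ Ipow I (m + n) p.2) s ->
  exists r, (forall i, Ipow I m.+1 (r i)) /\ \sum_(p <- s) p.1 * p.2 = comb gs r.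
Proof.
move=> IH; elim: s => [|p s IHs].
  by move=> _; exists (fun _ => 0); split; [move=> i; exact: Ipow0 | rewrite big_nil comb0].
move=> [[Ip1 Hp2] Hs]; have [r [Hr Er]] := IHs Hs.
have [r' [Hr' Er']] := IH _ Hp2.
exists (fun i => p.1 * r' i + r i); split.
  move=> i; apply: IpowD; last exact: Hr. exact: IpowS1.
by rewrite big_cons combD Er Er' /comb big_distrr /=; congr (_ + _); apply: eq_bigr => i _; rewrite mulrCA.
Qed.

Lemma decomp m x : Ipow I (m + n) x -> exists r, (forall i, Ipow I m (r i)) /\ x = comb gs r.
Proof.
elim: m x => [|m IH] x.
  by rewrite add0n => /gsSpan [r ->]; exists r.
rewrite addSn /= => [[s [Hs ->]]]; exact: decomp_list.
Qed.

Variable S : topologicalType.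
Variable F : S -> A.
Hypothesis Fc : cont_adic I F.
Hypothesis FI : forall t, Ipow I n (F t).

Definition Qd k (H : S -> A) (t : S) (r : nat -> A) :=
  exists t', Ipow I (k + n).+1 (H t - H t') /\ (forall i, Ipow I k (r i)) /\ H t' = comb gs r.
Definition delta k H t := epsilon (inhabits (fun _ : nat => 0 : A)) (Qd k H t).
Fixpoint hs k : S -> A :=
  if k is k'.+1 then fun t => hs k' t - comb gs (delta k' (hs k') t) else F.

Lemma hs_inv k : cont_adic I (hs k) /\ (forall t, Ipow I (k + n) (hs k t)).
Proof.
elim: k => [|k [Hc Hi]]; first by split.
set H := hs k.
have Qne : forall t, exists r, Qd k H t r.
  move=> t; have [r [Hr Er]] := decomp (Hi t); exists r, t; split => //.
  by rewrite subrr; exact: Ipow0.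
have Qsp : forall t, Qd k H t (delta k H t).
  by move=> t; apply: epsilon_spec; apply: Qne.
have Dloc : forall s : S, \forall t \near s, delta k H t = delta k H s.
  move=> s; apply: filterS (Hc (k + n).+1 s) => t /= Hts.
  rewrite /delta; congr epsilon; apply: funext => r; apply: propext.
  split => -[t' [h1 h2]]; exists t'; split => //.
    have -> : H s - H t' = (H t - H t') - (H t - H s) by ring.
    exact: Ipow_sub.
  have -> : H t - H t' = (H s - H t') + (H t - H s) by ring.
  exact: IpowD.
split.
  move=> m s; apply: filterS2 (Hc m s) (Dloc s) => t /= h1 h2.
  rewrite /H in h2; rewrite h2.
  by have -> : forall a b c : A, a - c - (b - c) = a - b by move=> *; ring.
move=> t; rewrite addSn; change (Ipow I (k+n).+1 (H t - comb gs (delta k H t))).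
by have [t' [h1 [_ <-]]] := Qsp t.
Qed.

Lemma delta_spec k t : exists t', Ipow I (k + n).+1 (hs k t - hs k t') /\
   (forall i, Ipow I k (delta k (hs k) t i)) /\ hs k t' = comb gs (delta k (hs k) t).
Proof.
have [Hc Hi] := hs_inv k.
apply: (epsilon_spec (inhabits (fun _ : nat => 0 : A)) (Qd k (hs k) t)).
have [r [Hr Er]] := decomp (Hi t); exists r, t; split => //.
by rewrite subrr; exact: Ipow0.
Qed.

Lemma delta_loc k (s : S) : \forall t \near s, delta k (hs k) t = delta k (hs k) s.
Proof.
have [Hc Hi] := hs_inv k; set H := hs k.
apply: filterS (Hc (k + n).+1 s) => t /= Hts.
rewrite /delta; congr epsilon; apply: funext => r; apply: propext.
split => -[t' [h1 h2]]; exists t'; split => //.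
  have -> : H s - H t' = (H t - H t') - (H t - H s) by ring.
  exact: Ipow_sub.
have -> : H t - H t' = (H s - H t') + (H t - H s) by ring.
exact: IpowD.
Qed.

Lemma hs_S k t : hs k.+1 t = hs k t - comb gs (delta k (hs k) t).
Proof. by []. Qed.

Definition Ps K i t := \sum_(k < K) delta k (hs k) t i.

Lemma Ps_S K i t : Ps K.+1 i t = Ps K i t + delta K (hs K) t i.
Proof. by rewrite /Ps big_ord_recr. Qed.

Definition cf i t := epsilon (inhabits (0 : A)) (fun l => forall K, Ipow I K (l - Ps K i t)).

Lemma cf_spec i t K : Ipow I K (cf i t - Ps K i t).
Proof.
move: K; apply: (epsilon_spec (inhabits (0:A)) (fun l => forall K, Ipow I K (l - Ps K i t))).
apply: Hcomp => K; rewrite Ps_S addrAC subrr add0r.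
by have [t' [_ [H _]]] := delta_spec K t.
Qed.

Lemma Ps_loc K i (s : S) : \forall t \near s, Ps K i t = Ps K i s.
Proof.
elim: K => [|K IH].
  by apply: nearW => t; rewrite /Ps !big_ord0.
apply: filterS2 IH (delta_loc K s) => t h1 h2.
by rewrite !Ps_S h1 h2.
Qed.

Lemma cf_cont i : cont_adic I (cf i).
Proof.
move=> m s; apply: filterS (Ps_loc m i s) => t /= h.
have -> : cf i t - cf i s = (cf i t - Ps m i t) - (cf i s - Ps m i s) by rewrite h; ring.
by apply: Ipow_sub; apply: cf_spec.
Qed.

Lemma hs_id K t : F t - comb gs (fun i => Ps K i t) = hs K t.
Proof.
elim: K => [|K IH].
  by rewrite /Ps /=; under eq_fun do rewrite big_ord0; rewrite comb0 subr0.
rewrite hs_S -IH; under eq_fun do rewrite Ps_S; rewrite combD; ring.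
Qed.

Lemma cf_id t : F t = comb gs (fun i => cf i t).
Proof.
apply/eqP; rewrite -subr_eq0; apply/eqP; apply: Hsep => K.
have -> : F t - comb gs (fun i => cf i t) =
     hs K t - comb gs (fun i => cf i t - Ps K i t).
  by rewrite combB -hs_id; ring.
apply: Ipow_sub.
  by apply: (Ipow_le (leq_addr n K)); case: (hs_inv K).
by apply: comb_Ipow => i; apply: cf_spec.
Qed.

Lemma lift_lemma : exists l : seq ((S -> A) * A),
  list_all (fun p => cont_adic I p.1 /\ Ipow I n p.2) l /\
  forall t, F t = \sum_(p <- l) p.1 t * p.2.
Proof.
exists [seq (cf i, gs`_i) | i <- iota 0 (size gs)]; split.
  apply/list_all_map/list_allP => i; rewrite mem_iota add0n => /andP [_ Hi].
  by split; [apply: cf_cont | apply: gsI].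
move=> t; rewrite big_map cf_id /comb -(subn0 (size gs)) -/(index_iota 0 _) big_mkord subn0.
by apply: eq_bigr => i _; rewrite mulrC.
Qed.

End Lift.

Section Loc.
Variables (A : comPzRingType) (I : A -> Prop) (f : A).
Hypothesis HI : is_ideal I.
Let Ipow0 := Ipow0 HI. Let IpowD := IpowD HI. Let Ipow_sub := Ipow_sub HI. Let IpowN := IpowN HI.
Let IpowMl := IpowMl HI. Let IpowMr := IpowMr HI. Let Ipow_sum := Ipow_sum HI.

Definition congB n (b b' : Brep A) := IpowB I f n (subB f b b').

Lemma foldB_I n (l : seq (Brep A * A)) : list_all (fun p => Ipow I n p.2) l ->
  Ipow I n (foldr (addB f) (zeroB A) (map (fun p => mulB p.1 (iotaB p.2)) l)).1.
Proof.
elim: l => [|p l IH] /=; first by move=> _; apply: Ipow0.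
move=> [Hp Hl]; apply: IpowD; last by apply: IpowMr; apply: IH.
by apply: IpowMr; apply: IpowMl.
Qed.

Lemma IpowB_char n (b : Brep A) : IpowB I f n b <-> exists e, Ipow I n (f ^+ e * b.1).
Proof.
case: b => c k /=; split.
  move=> [l [Hl [m Hm]]]; set Fo := foldr _ _ _ in Hm.
  exists (m + Fo.2)%N.
  have -> : f ^+ (m + Fo.2) * c = f ^+ m * (c * f ^+ Fo.2 - Fo.1 * f ^+ k) + f ^+ m * f ^+ k * Fo.1.
    by gpow; ring.
  rewrite Hm add0r; apply: IpowMl; exact: foldB_I.
move=> [e He]; exists [:: ((1, (k + e)%N), f ^+ e * c)]; split => //=.
exists 0%N; rewrite /= !addn0; gpow; ring.
Qed.

Lemma congB_char n b b' : congB n b b' <->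
  exists e, Ipow I n (f ^+ e * (b.1 * f ^+ b'.2 - b'.1 * f ^+ b.2)).
Proof.
rewrite /congB IpowB_char /=; split => -[e He]; exists e; apply: (Ipow_eq He); gpow; ring.
Qed.

Lemma congB_refl n b : congB n b b.
Proof. apply/congB_char; exists 0%N; rewrite subrr mulr0; exact: Ipow0. Qed.

Lemma congB_sym n b b' : congB n b b' -> congB n b' b.
Proof.
move=> /congB_char [e He]; apply/congB_char; exists e.
rewrite -[X in Ipow _ _ X]opprK; apply: IpowN => //; apply: (Ipow_eq He); gpow; ring.
Qed.

Lemma congB_trans n a b c : congB n a b -> congB n b c -> congB n a c.
Proof.
move=> /congB_char [e1 H1] /congB_char [e2 H2]; apply/congB_char.
exists (e1 + e2 + b.2)%N.
have -> : f ^+ (e1 + e2 + b.2) * (a.1 * f ^+ c.2 - c.1 * f ^+ a.2) =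
   f ^+ (e2 + c.2) * (f ^+ e1 * (a.1 * f ^+ b.2 - b.1 * f ^+ a.2)) +
   f ^+ (e1 + a.2) * (f ^+ e2 * (b.1 * f ^+ c.2 - c.1 * f ^+ b.2)).
  by gpow; ring.
by apply: IpowD; apply: IpowMl.
Qed.

Lemma congB_mono n b b' : congB n.+1 b b' -> congB n b b'.
Proof. by move=> /congB_char [e He]; apply/congB_char; exists e; apply: Ipow_mono. Qed.

Lemma congB_scale n (a : A) (k K : nat) : (k <= K)%N -> congB n (a * f ^+ (K - k), K) (a, k).
Proof.
move=> kK; apply/congB_char; exists 0%N => /=.
have -> : f ^+ K = f ^+ (K - k) * f ^+ k by rewrite -exprD subnK.
by rewrite expr0 mul1r mulrA subrr; apply: Ipow0.
Qed.

Variable S : topologicalType.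

Definition evR (s : S) (z : Rrep A S) : Brep A := (z.1 s, z.2).

Lemma ev_fold s (l : seq (Rrep A S * A)) :
  evR s (foldr (@addR A f S) (zeroR A S) (map (fun p => mulR p.1 (iotaR S p.2)) l)) =
  foldr (addB f) (zeroB A) (map (fun p => mulB p.1 (iotaB p.2)) (map (fun p => (evR s p.1, p.2)) l)).
Proof. by elim: l => [|p l IH] //=; rewrite -IH. Qed.

Lemma IpowR_ev n z s : IpowR I f n z -> IpowB I f n (evR s z).
Proof.
move=> [l [Hl [m Hm]]]; exists (map (fun p => (evR s p.1, p.2)) l); split.
  by apply/list_all_map; apply: list_all_impl Hl => p [].
rewrite -ev_fold; exists m; exact: Hm.
Qed.

Lemma IpowR_of_rep n (G : S -> A) k e (l : seq ((S -> A) * A)) :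
  list_all (fun p => cont_adic I p.1 /\ Ipow I n p.2) l ->
  (forall t, f ^+ e * G t = \sum_(p <- l) p.1 t * p.2) ->
  IpowR I f n (G, k).
Proof.
move=> Hl HG.
exists (map (fun p => ((p.1, (k + e)%N), p.2)) l); split.
  by apply/list_all_map.
set Fo := foldr _ _ _.
have C : forall t, Fo.1 t * f ^+ (k + e) = (\sum_(p <- l) p.1 t * p.2) * f ^+ Fo.2.
  rewrite /Fo => t; elim: (l) => [|p l' IH] /=.
    by rewrite big_nil !mul0r.
  rewrite big_cons !addn0 IH; gpow; ring.
exists (k + e)%N => t /=.
have -> : f ^+ (k + e) * (G t * f ^+ Fo.2 - Fo.1 t * f ^+ k) =
   f ^+ Fo.2 * f ^+ k * (f ^+ e * G t) - f ^+ k * (Fo.1 t * f ^+ (k + e)).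
  by gpow; ring.
rewrite C HG; gpow; ring.
Qed.

End Loc.

Lemma unif (S : topologicalType) (P : nat -> S -> Prop) :
  compact [set: S] -> (forall e e' t, (e <= e')%N -> P e t -> P e' t) ->
  (forall s : S, exists e, \forall t \near s, P e t) -> exists e, forall t, P e t.
Proof.
move=> /compact_near_coveringP cS mono loc.
have : \forall i \near \oo, [set: S] `<=` P i.
  apply: cS => x _.
  have [e He] := loc x.
  exists ([set t | P e t], [set i | (e <= i)%N]); first split => //=.
    by exists e.
  by move=> [t i] /= [Pt ei]; apply: mono ei Pt.
by case=> N _ HN; exists N => t; apply: (HN N) => //=.
Qed.

Section Main.
Variables (A : comPzRingType) (I : A -> Prop) (f : A) (S : topologicalType).
Hypothesis HI : is_ideal I.
Hypothesis Hsep : forall x, (forall n, Ipow I n x) -> x = 0.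
Hypothesis Hcomp : forall a : nat -> A, (forall n, Ipow I n (a n.+1 - a n)) ->
     exists l, forall n, Ipow I n (l - a n).
Hypothesis HN : noetherian_ring A.
Hypothesis Scpt : compact [set: S].
Let Ipow0 := Ipow0 HI. Let IpowD := IpowD HI. Let Ipow_sub := Ipow_sub HI.
Let IpowMl := IpowMl HI. Let IpowMr := IpowMr HI.

Lemma cont_lin (g1 g2 : S -> A) a b : cont_adic I g1 -> cont_adic I g2 ->
  cont_adic I (fun t => g1 t * a + - g2 t * b).
Proof.
move=> h1 h2 m s; apply: filterS2 (h1 m s) (h2 m s) => t /= e1 e2.
have -> : g1 t * a + - g2 t * b - (g1 s * a + - g2 s * b) =
   (g1 t - g1 s) * a - (g2 t - g2 s) * b by ring.
by apply: Ipow_sub; apply: IpowMr.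
Qed.

Lemma LC_cont (g : S -> A) : (forall s, \forall t \near s, g t = g s) -> cont_adic I g.
Proof.
move=> H m s; apply: filterS (H s) => t /= ->; rewrite subrr; exact: Ipow0.
Qed.

Lemma keyR n (G : S -> A) k : cont_adic I G ->
  (forall t, exists e, Ipow I n (f ^+ e * G t)) -> IpowR I f n (G, k).
Proof.
move=> Gc Gp.
have [e He] : exists e, forall t, Ipow I n (f ^+ e * G t).
  apply: unif => //.
    move=> e e' t ee' H; rewrite -(subnK ee') exprD -mulrA; exact: IpowMl.
  move=> s; have [e He] := Gp s; exists e.
  apply: filterS (Gc n s) => t /= Ht.
  have -> : f ^+ e * G t = f ^+ e * G s + f ^+ e * (G t - G s) by ring.
  by apply: IpowD => //; apply: IpowMl.
have [gs [gsI gsS]] := noeth_fg HN (Ipow_ideal HI n).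
have Fc : cont_adic I (fun t => f ^+ e * G t).
  move=> m s; apply: filterS (Gc m s) => t /= Ht.
  by rewrite -mulrBr; apply: IpowMl.
have [l [Hl Hid]] := lift_lemma HI Hsep Hcomp gsI gsS Fc He.
exact: (IpowR_of_rep k Hl Hid).
Qed.

End Main.

Section Surj.
Variables (A : comPzRingType) (I : A -> Prop) (f : A) (S : topologicalType).
Hypothesis HI : is_ideal I.
Hypothesis Hsep : forall x, (forall n, Ipow I n x) -> x = 0.
Hypothesis Hcomp : forall a : nat -> A, (forall n, Ipow I n (a n.+1 - a n)) ->
     exists l, forall n, Ipow I n (l - a n).
Hypothesis HN : noetherian_ring A.
Hypothesis Scpt : compact [set: S].
Variable h : S -> nat -> Brep A.
Hypothesis Hh : forall s, hatB_elem I f (h s).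
Hypothesis Hhc : cont_hatB I f h.

Definition relh n t t' := congB I f n (h t n) (h t' n).
Definition reph n t := epsilon (inhabits t) (relh n t).

Lemma reph_spec n t : relh n t (reph n t).
Proof.
apply: (epsilon_spec (inhabits t) (relh n t)); exists t; exact: congB_refl.
Qed.

Lemma reph_loc n (s : S) : \forall t \near s, reph n t = reph n s.
Proof.
apply: filterS (Hhc n s) => t /= Hts.
have E : relh n t = relh n s.
  apply: funext => t'; apply: propext; rewrite /relh; split => H.
    exact: (congB_trans HI (congB_sym HI Hts) H).
  exact: (congB_trans HI Hts H).
by rewrite /reph E (Prop_irrelevance (inhabits t) (inhabits s)).
Qed.

Definition kk n t := (h (reph n t) n).2.
Definition Kn n := epsilon (inhabits 0%N) (fun K => forall t, (kk n t <= K)%N).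

Lemma Kn_spec n t : (kk n t <= Kn n)%N.
Proof.
move: t; apply: (epsilon_spec (inhabits 0%N) (fun K => forall t, (kk n t <= K)%N)).
apply: unif => //.
  by move=> e e' t ee' H; apply: leq_trans ee'.
move=> s; exists (kk n s); apply: filterS (reph_loc n s) => t /= E.
by rewrite /kk E.
Qed.

Definition xs n : Rrep A S := (fun t => (h (reph n t) n).1 * f ^+ (Kn n - kk n t), Kn n).

Lemma xs_cont n : cont_adic I (xs n).1.
Proof.
apply: (LC_cont HI) => s; apply: filterS (reph_loc n s) => t /= E.
by rewrite /kk E.
Qed.

Lemma xs_cong n t : congB I f n (Phi xs t n) (h t n).
Proof.
have E := congB_scale f HI n (h (reph n t) n).1 (Kn_spec n t).
rewrite /kk -surjective_pairing in E.
exact: (congB_trans HI E (congB_sym HI (reph_spec n t))).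
Qed.

Lemma surj : exists x, hatR_elem I f x /\ forall s, eqHatB I f (Phi x s) (h s).
Proof.
exists xs; split; last by move=> s n; exact: xs_cong.
split; first exact: xs_cont.
move=> n; apply: (keyR HI Hsep Hcomp HN Scpt).
  exact: (cont_lin HI _ _ (xs_cont n.+1) (xs_cont n)).
move=> t.
have C : congB I f n (Phi xs t n.+1) (Phi xs t n).
  apply: (congB_trans HI (congB_mono HI (xs_cong n.+1 t))).
  exact: (congB_trans HI (Hh t n) (congB_sym HI (xs_cong n t))).
by move: C; rewrite /congB IpowB_char.
Qed.

End Surj.

Theorem lemma2p5 (A : comPzRingType) (I : A -> Prop) (S : topologicalType)
    (f : A) :
  noetherian_ring A -> adic_ring I -> profinite S ->
  [/\
   (* Phi is well defined: lands in continuous maps S -> hat(A[1/f]) ... *)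
   (forall x : nat -> Rrep A S, hatR_elem I f x ->
      (forall s, hatB_elem I f (Phi x s)) /\ cont_hatB I f (Phi x)),
   (* ... and respects equality in the completion *)
   (forall x y : nat -> Rrep A S, hatR_elem I f x -> hatR_elem I f y -> eqHatR I f x y ->
      forall s, eqHatB I f (Phi x s) (Phi y s)),
   (* Phi is a ring homomorphism *)
   (forall x y : nat -> Rrep A S, hatR_elem I f x -> hatR_elem I f y -> forall s,
      eqHatB I f (Phi (addHatR f x y) s) (addHatB f (Phi x s) (Phi y s)) /\
      eqHatB I f (Phi (mulHatR x y) s) (mulHatB (Phi x s) (Phi y s))) /\
   (forall s, eqHatB I f (Phi (@oneHatR A S) s) (@oneHatB A)),
   (* Phi is injective *)
   (forall x y : nat -> Rrep A S, hatR_elem I f x -> hatR_elem I f y ->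
      (forall s, eqHatB I f (Phi x s) (Phi y s)) -> eqHatR I f x y) &
   (* Phi is surjective onto C(S, hat(A[1/f])) *)
   (forall h : S -> nat -> Brep A,
      (forall s, hatB_elem I f (h s)) -> cont_hatB I f h ->
      exists x, hatR_elem I f x /\ forall s, eqHatB I f (Phi x s) (h s))].
Proof.
move=> HN [HI [Hsep Hcomp]] [Scpt _ _]; split.
- move=> x [xv xI]; split.
    by move=> s n; exact: (IpowR_ev s (xI n)).
  move=> n s; apply: filterS (xv n n s) => t /= Ht.
  apply/(IpowB_char f HI); exists 0%N => /=.
  rewrite expr0 mul1r mulNr -mulrBl; exact: IpowMr.
- by move=> x y _ _ Hxy s n; exact: (IpowR_ev s (Hxy n)).
- split.
    by move=> x y _ _ s; split => n; exact: (congB_refl f HI).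
  by move=> s n; exact: (congB_refl f HI).
- move=> x y [xv _] [yv _] H n.
  apply: (keyR HI Hsep Hcomp HN Scpt).
    exact: (cont_lin HI _ _ (xv n) (yv n)).
  move=> t; have := H t n.
  by rewrite (IpowB_char f HI).
- by move=> h Hh Hhc; exact: (surj HI Hsep Hcomp HN Scpt Hh Hhc).
Qed.
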